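(* Let $(Y,\preceq,\prec,\to)$ be a solid vector space, let $b\in Y$ with $b\succ0$, and let $\|\cdot\|\colon Y\to\mathbb R$ be the Minkowski functional of $[-b,b]$. Then: (i) $\|\cdot\|$ is a monotone norm on $Y$ and $\|x\|=\min\{\lambda\ge0: -\lambda b\preceq x\preceq\lambda b\}$ for all $x\in Y$; (ii) for $x\in Y$ and $\varepsilon>0$, $\|x\|<\varepsilon$ if and only if $-\varepsilon b\prec x\prec\varepsilon b$.
   Context: Vector space with convergence: a real vector space $Y$ with a relation $\to$ between sequences in $Y$ and points of $Y$ (uniqueness of limits not assumed) such that (C1) $x_n\to x$, $y_n\to y$ imply $x_n+y_n\to x+y$; (C2) $x_n\to x$, $\lambda\in\mathbb R$ imply $\lambda x_n\to\lambda x$; (C3) $\lambda_n\to\lambda$ in $\mathbb R$ imply $\lambda_n x\to\lambda x$. $A\subseteq Y$ is open if $x_n\to x\in A$ implies $x_n\in A$ for all but finitely many $n$; closed if $x_n\to x$, $x_n\in A$ $\forall n$ imply $x\in A$; $A^\circ$ is the union of all open subsets of $A$. A cone is a nonempty closed $K$ with $\lambda K\subseteq K$ ($\lambda\ge0$), $K+K\subseteq K$, $K\cap(-K)=\{0\}$; solid if $K\ne\{0\}$, $K^\circ\ne\emptyset$. A vector ordering is a partial order $\preceq$ with (V1) $x\preceq y\Rightarrow x+z\preceq y+z$; (V2) $\lambda\ge0$, $x\preceq y\Rightarrow\lambda x\preceq\lambda y$; (V3) $x_n\to x$, $y_n\to y$, $x_n\preceq y_n$ $\forall n\Rightarrow x\preceq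 y$. Solid vector space: positive cone $K=\{x:x\succeq0\}$ solid, with $x\prec y$ iff $y-x\in K^\circ$. $[a,b]=\{x:a\preceq x\preceq b\}$. Minkowski functional of $A$: $\|x\|=\inf\{\lambda\ge0: x\in\lambda A\}$. A norm is monotone if $\|x\|\le\|y\|$ whenever $0\preceq x\preceq y$. *)

(* Defs.v *)
From HB Require Import structures.
From mathcomp Require Import all_boot all_order all_algebra.
From mathcomp Require Import all_classical all_reals topology normedtype.
Set Implicit Arguments. Unset Strict Implicit. Unset Printing Implicit Defensive.
Import Order.TTheory GRing.Theory Num.Theory numFieldNormedType.Exports.
Local Open Scope classical_set_scope.
Local Open Scope ring_scope.

Section VSC.
Variables (R : realType) (Y : lmodType R).
Variable conv : (nat -> Y) -> Y -> Prop.

Definition vsc_axioms : Prop :=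
  [/\ (forall (x y : nat -> Y) (a c : Y), conv x a -> conv y c ->
          conv (fun n => x n + y n) (a + c)),
      (forall (x : nat -> Y) (a : Y) (l : R), conv x a ->
          conv (fun n => l *: x n) (l *: a)) &
      (forall (lam : nat -> R) (l : R) (x : Y), lam @ \oo --> l ->
          conv (fun n => lam n *: x) (l *: x))].

Definition vopen (A : set Y) : Prop :=
  forall (x : nat -> Y) (a : Y), conv x a -> A a ->
    exists N : nat, forall n : nat, (N <= n)%N -> A (x n).

Definition vclosed (A : set Y) : Prop :=
  forall (x : nat -> Y) (a : Y), conv x a -> (forall n, A (x n)) -> A a.

Definition vinterior (A : set Y) : set Y :=
  fun x => exists U : set Y, [/\ vopen U, U `<=` A & U x].

Definition is_cone (K : set Y) : Prop :=
  [/\ K !=set0, vclosed K,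
      (forall (l : R) (x : Y), 0 <= l -> K x -> K (l *: x)),
      (forall x y, K x -> K y -> K (x + y)) &
      K `&` [set - x | x in K] = [set 0]].

Definition solid_cone (K : set Y) : Prop :=
  [/\ is_cone K, K <> [set 0] & vinterior K !=set0].

Variable le : Y -> Y -> Prop.

Definition vector_ordering : Prop :=
  [/\ (forall x, le x x) /\
      (forall x y, le x y -> le y x -> x = y) /\
      (forall x y z, le x y -> le y z -> le x z),
      (forall x y z, le x y -> le (x + z) (y + z)),
      (forall (l : R) x y, 0 <= l -> le x y -> le (l *: x) (l *: y)) &
      (forall (x y : nat -> Y) (a c : Y), conv x a -> conv y c ->
          (forall n, le (x n) (y n)) -> le a c)].

Definition pos_cone : set Y := [set x | le 0 x].

Definition vlt (x y : Y) : Prop := vinterior pos_cone (y - x).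

Definition solid_vector_space : Prop :=
  [/\ vsc_axioms, vector_ordering & solid_cone pos_cone].

Definition order_interval (a b : Y) : set Y := [set x | le a x /\ le x b].

Definition monotone_norm (nrm : Y -> R) : Prop :=
  forall x y, le 0 x -> le x y -> nrm x <= nrm y.
End VSC.

Definition minkowski (R : realType) (Y : lmodType R) (A : set Y) (x : Y) : R :=
  inf [set l : R | 0 <= l /\ exists2 a, A a & x = l *: a].

Definition is_norm (R : realType) (Y : lmodType R) (nrm : Y -> R) : Prop :=
  [/\ (forall x, 0 <= nrm x),
      (forall x, nrm x = 0 <-> x = 0),
      (forall (l : R) x, nrm (l *: x) = `|l| * nrm x) &
      (forall x y, nrm (x + y) <= nrm x + nrm y)].

(* Main.v *)
Require Import Defs.
From HB Require Import structures.
From mathcomp Require Import all_boot all_order all_algebra.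
From mathcomp Require Import all_classical all_reals topology normedtype.
From mathcomp Require Import sequences.
From mathcomp Require Import lra.
Import Order.TTheory GRing.Theory Num.Theory numFieldNormedType.Exports.
Local Open Scope classical_set_scope.
Local Open Scope ring_scope.

Theorem lemma7p6 (R : realType) (Y : lmodType R)
  (conv : (nat -> Y) -> Y -> Prop) (le : Y -> Y -> Prop)
  (HY : solid_vector_space conv le) (b : Y) (Hb : vlt conv le 0 b) :
  let nrm := minkowski (order_interval le (- b) b) in
  (is_norm nrm /\ monotone_norm le nrm /\
   (forall x : Y,
      let S := [set l : R | 0 <= l /\ le (- (l *: b)) x /\ le x (l *: b)] in
      S (nrm x) /\ (forall l, S l -> nrm x <= l))) /\
  (forall (x : Y) (eps : R), 0 < eps ->
     (nrm x < eps <-> vlt conv le (- (eps *: b)) x /\ vlt conv le x (eps *: b))).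
Proof.
case: HY => [[C1 C2 C3] [[lerefl [leanti letrans]] V1 V2 V3] _].
have conv_ext : forall (u v : nat -> Y) a, (forall n, u n = v n) -> conv u a -> conv v a.
  by move=> u v a e; have -> : v = u by apply: boolp.funext => n; rewrite e.
have conv_cst : forall w : Y, conv (fun _ => w) w.
  move=> w; have h := C3 (fun _ => 1) 1 w (cvg_cst (1:R)); rewrite scale1r in h.
  by apply: h; apply: filter_class.
have conv_h : forall v, conv (fun n => n.+1%:R^-1 *: v) 0.
  move=> v; have h := C3 (@harmonic R) 0 v cvg_harmonic; rewrite scale0r in h.
  by apply: (conv_ext _ _ _ _ h) => n.
have lesub : forall x y, le x y <-> le 0 (y - x).
  move=> x y; split => h.
  - by have := V1 _ _ (-x) h; rewrite subrr.
  - by have := V1 _ _ x h; rewrite add0r subrK.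
have leadd : forall a c d e, le a d -> le c e -> le (a + c) (d + e).
  move=> a c d e h1 h2; apply: (letrans _ (d + c)); first exact: V1.
  by rewrite (addrC d c) (addrC d e); exact: V1.
have lesc : forall c y, 0 <= c -> le 0 y -> le 0 (c *: y).
  by move=> c y c0 h; have := V2 c _ _ c0 h; rewrite scaler0.
have intK : forall z, vinterior conv (pos_cone le) z -> le 0 z.
  by move=> z [U [_ sUK Uz]]; exact: sUK.
have int_ev : forall z, vinterior conv (pos_cone le) z -> forall v,
    exists N, forall n, (N <= n)%N -> le 0 (z + n.+1%:R^-1 *: v).
  move=> z [U [oU sUK Uz]] v.
  have := C1 _ _ _ _ (conv_cst z) (conv_h v); rewrite addr0 => /oU /(_ Uz) [N HN].
  by exists N => n /HN; exact: sUK.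
have int_add : forall k z, le 0 k -> vinterior conv (pos_cone le) z ->
    vinterior conv (pos_cone le) (k + z).
  move=> k z hk [U [oU sUK Uz]]; exists [set y | U (y - k)]; split.
  - move=> u a cu /= Ua; have := C1 _ _ _ _ cu (conv_cst (-k)).
    by move=> /oU /(_ Ua) [N HN]; exists N => n /HN.
  - move=> y /= Uy; have h := sUK _ Uy.
    exact: letrans hk (proj2 (lesub k y) h).
  - by rewrite /= addrAC subrr add0r.
have int_scale : forall c z, 0 < c -> vinterior conv (pos_cone le) z ->
    vinterior conv (pos_cone le) (c *: z).
  move=> c z c0 [U [oU sUK Uz]]; exists [set y | U (c^-1 *: y)]; split.
  - move=> u a cu /= Ua; have := C2 _ _ c^-1 cu.
    by move=> /oU /(_ Ua) [N HN]; exists N => n /HN.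
  - move=> y /= Uy; have h := sUK _ Uy.
    by have := V2 c _ _ (ltW c0) h; rewrite scaler0 scalerA mulfV ?gt_eqF // scale1r.
  - by rewrite /= scalerA mulVf ?gt_eqF // scale1r.
have Hb' : vinterior conv (pos_cone le) b by move: Hb; rewrite /vlt subr0.
have b0 : le 0 b by exact: intK.
pose S x := [set l : R | 0 <= l /\ le (- (l *: b)) x /\ le x (l *: b)].
have S_up : forall x l l', S x l -> l <= l' -> S x l'.
  move=> x l l' [l0 [h1 h2]] ll'; split; first exact: le_trans l0 ll'.
  split.
  - apply: letrans h1; apply/lesub.
    have -> : - (l *: b) - - (l' *: b) = (l' - l) *: b by rewrite scalerBl opprK addrC.
    by apply: lesc; rewrite // subr_ge0.
  - apply: letrans h2 _; apply/lesub; rewrite -scalerBl.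
    by apply: lesc; rewrite // subr_ge0.
have hsc : forall v (c : R), 0 < c -> le 0 (b + c^-1 *: v) -> le 0 (c *: b + v).
  move=> v c c0 h; have := lesc c _ (ltW c0) h.
  by rewrite scalerDr scalerA mulfV ?gt_eqF // scale1r.
have S_ne : forall x, exists l, S x l.
  move=> x; have [N1 H1] := int_ev _ Hb' x; have [N2 H2] := int_ev _ Hb' (-x).
  have h1 := H1 (N1 + N2)%N (leq_addr _ _); have h2 := H2 (N1 + N2)%N (leq_addl _ _).
  have c0 : 0 < (N1 + N2).+1%:R :> R by rewrite ltr0Sn.
  exists (N1 + N2).+1%:R; split; first exact: ltW.
  split.
  - by apply/lesub; rewrite opprK addrC; exact: hsc.
  - by apply/lesub; exact: hsc.
have S_min : forall x, S x (inf (S x)) /\ forall l, S x l -> inf (S x) <= l.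
  move=> x; have [l0 Sl0] := S_ne x.
  have lb : lbound (S x) 0 by move=> l [].
  have hinf : has_inf (S x) by split; [exists l0 | exists 0].
  have m0 : 0 <= inf (S x) := lb_le_inf (ex_intro _ l0 Sl0) lb.
  split; last by move=> l Sl; exact: (ge_inf (ex_intro _ 0 lb)).
  have Sd : forall n, S x (inf (S x) + n.+1%:R^-1).
    move=> n; have hp : 0 < n.+1%:R^-1 :> R by rewrite invr_gt0 ltr0Sn.
    have [e Se he] := inf_adherent hp hinf.
    by apply: S_up Se _; exact: ltW.
  have cb : conv (fun n => (inf (S x) + n.+1%:R^-1) *: b) (inf (S x) *: b).
    have h := C1 _ _ _ _ (conv_cst (inf (S x) *: b)) (conv_h b); rewrite addr0 in h.
    by apply: (conv_ext _ _ _ _ h) => n; rewrite scalerDl.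
  have cnb : conv (fun n => - ((inf (S x) + n.+1%:R^-1) *: b)) (- (inf (S x) *: b)).
    have h := C2 _ _ (-1) cb; rewrite scaleN1r in h.
    by apply: (conv_ext _ _ _ _ h) => n; rewrite scaleN1r.
  split; first exact: m0.
  split.
  - by apply: (V3 _ _ _ _ cnb (conv_cst x)) => n; case: (Sd n) => _ [].
  - by apply: (V3 _ _ _ _ (conv_cst x) cb) => n; case: (Sd n) => _ [].
have mink : forall x, minkowski (order_interval le (- b) b) x = inf (S x).
  move=> x; rewrite /minkowski; congr inf; apply/seteqP; split => l /=.
  - move=> [l0 [a [ha1 ha2] ->]]; split=> //; split.
    + by rewrite -scalerN; exact: V2.
    + exact: V2.
  - move=> [l0 [h1 h2]]; split=> //.
    move: l0; rewrite le_eqVlt => /orP [/eqP l0 | lp].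
    + rewrite -l0 in h1 h2 *; exists 0.
        split; last exact: b0.
        by apply/lesub; rewrite sub0r opprK.
      rewrite scale0r oppr0 in h1 h2; rewrite scaler0; exact: leanti h2 h1.
    + have li : 0 <= l^-1 by rewrite invr_ge0 ltW.
      exists (l^-1 *: x).
        split.
        * have := V2 l^-1 _ _ li h1.
          by rewrite scalerN scalerA mulVf ?gt_eqF // scale1r.
        * have := V2 l^-1 _ _ li h2.
          by rewrite scalerA mulVf ?gt_eqF // scale1r.
      by rewrite scalerA mulfV ?gt_eqF // scale1r.
have S_neg : forall x l, S x l -> S (- x) l.
  move=> x l [l0 [h1 h2]]; split=> //; split.
  - by apply/lesub; rewrite opprK addrC; exact: (proj1 (lesub _ _) h2).
  - by apply/lesub; rewrite opprK addrC; move/lesub: h1; rewrite opprK.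
have S_scale : forall x c l, 0 <= c -> S x l -> S (c *: x) (c * l).
  move=> x c l c0 [l0 [h1 h2]]; split; first exact: mulr_ge0.
  split.
  - by have := V2 c _ _ c0 h1; rewrite scalerN scalerA.
  - by have := V2 c _ _ c0 h2; rewrite scalerA.
have S_add : forall x y s t, S x s -> S y t -> S (x + y) (s + t).
  move=> x y s t [s0 [h1 h2]] [t0 [h3 h4]]; split; first exact: addr_ge0.
  split.
  - by rewrite scalerDl opprD; exact: leadd.
  - by rewrite scalerDl; exact: leadd.
move=> nrm.
have nE : forall x, nrm x = inf (S x) := mink.
have nS : forall x, S x (nrm x) by move=> x; rewrite nE; exact: (S_min x).1.
have nle : forall x l, S x l -> nrm x <= l by move=> x l; rewrite nE; exact: (S_min x).2.
have n0 : forall x, 0 <= nrm x by move=> x; case: (nS x).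
have nsc1 : forall l x, nrm (l *: x) <= `|l| * nrm x.
  move=> l x; apply: nle; case: (lerP 0 l) => hl.
  - by rewrite ger0_norm //; exact: S_scale.
  - rewrite ltr0_norm //.
    have -> : l *: x = (- l) *: (- x) by rewrite scaleNr scalerN opprK.
    by apply: S_scale; [rewrite oppr_ge0 ltW | exact: S_neg].
split.
  split.
  split.
  - exact: n0.
  - move=> x; split.
    + move=> h; have := nS x; rewrite h => -[_ [h1 h2]].
      rewrite scale0r oppr0 in h1 h2; exact: leanti h2 h1.
    + move=> ->; apply: le_anti; rewrite n0 andbT; apply: nle.
      by split=> //; rewrite scale0r oppr0; split; exact: lerefl.
  - move=> l x; apply: le_anti; apply/andP; split; first exact: nsc1.
    have [->|l0] := eqVneq l 0; first by rewrite normr0 mul0r n0.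
    have h := nsc1 l^-1 (l *: x); rewrite scalerA mulVf // scale1r normfV in h.
    have := ler_wpM2l (normr_ge0 l) h.
    by rewrite mulrA mulfV ?normr_eq0 // mul1r.
  - by move=> x y; apply: nle; exact: S_add (nS x) (nS y).
  split.
  - move=> x y hx hxy; apply: nle; have [l0 [h1 h2]] := nS y; split=> //; split.
    + apply: letrans _ hx; apply/lesub; rewrite sub0r opprK; exact: lesc l0 b0.
    + exact: letrans hxy h2.
  - by move=> x S'; split; [exact: nS | exact: nle].
move=> x eps e0; split.
- move=> hlt; have [m0 [h1 h2]] := nS x.
  have bi : vinterior conv (pos_cone le) ((eps - nrm x) *: b).
    by apply: int_scale => //; rewrite subr_gt0.
  split; rewrite /vlt.
  + have -> : x - - (eps *: b) = (x - - (nrm x *: b)) + (eps - nrm x) *: b.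
      by rewrite scalerBl !opprK (addrC (eps *: b)) addrA addrK.
    by apply: int_add => //; exact: (proj1 (lesub _ _) h1).
  + have -> : eps *: b - x = (nrm x *: b - x) + (eps - nrm x) *: b.
      by rewrite scalerBl [RHS]addrC addrA addrNK.
    by apply: int_add => //; exact: (proj1 (lesub _ _) h2).
- move=> [h1 h2].
  have [N1 H1] := int_ev _ h1 (- (eps *: b)).
  have [N2 H2] := int_ev _ h2 (- (eps *: b)).
  have k1 := H1 (N1 + N2)%N (leq_addr _ _).
  have k2 := H2 (N1 + N2)%N (leq_addl _ _).
  set h := (N1 + N2).+1%:R^-1 in k1 k2.
  have hp : 0 < h by rewrite invr_gt0 ltr0Sn.
  have h1' : h <= 1 by rewrite invf_le1 ?ltr0Sn // ler1n.
  have ep : 0 < eps * h by exact: mulr_gt0.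
  apply: (le_lt_trans (nle x (eps - eps * h) _)); last by lra.
  split; first by nra.
  split.
  + apply/lesub; move: k1.
    by rewrite scalerN scalerA scalerBl (mulrC h eps) !opprK addrA.
  + apply/lesub; move: k2.
    by rewrite scalerN scalerA scalerBl (mulrC h eps) addrAC.
Qed.
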